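(* Let $G$ be a small category and $X$ a set with a partial category action by $G$; let $Y$ with its global action by $G$ be as defined below, and let $i : X\to Y$ be given by $i(x) = [e,x]$ where $e\in{\rm ob}(G)$ is any object with $e\cdot x$ defined. Then $i$ is injective, and for all $y,z\in X$ and $g\in{\rm mor}(G)$: $g\cdot y$ is defined and equal to $z$ if and only if $g\cdot i(y)$ is defined and equal to $i(z)$.
   Context: Conventions: $G$ is a small category; objects are identified with their identity morphisms, so ${\rm ob}(G)\subseteq{\rm mor}(G)$; $d(g), c(g)$ are domain and codomain, $G^2=\{(g,h)\mid d(g)=c(h)\}$. A partial category action by $G$ on $X$ is a partial function ${\rm mor}(G)\times X\to X$, $(g,x)\mapsto g\cdot x$ where defined, such that: (C1) for every $x$ there is $e\in{\rm ob}(G)$ with $e\cdot x$ defined, and whenever $f\in{\rm ob}(G)$ and $f\cdot x$ is defined, $f\cdot x=x$; (C2) if $g\cdot x$ is defined then $d(g)\cdot x$ is defined; (C3) if $(g,h)\in G^2$ and $h\cdot x$ is defined, then $(gh)\cdot x$ is defined iff $g\cdot(h\cdot x)$ is defined, and then they are equal. Let $\overline{X} = \{(g,x)\in{\rm mor}(G)\times X\mid d(g)\cdot x\text{ defined}\}$. Define $(g,x)\sim(g',x')$ on $\overline{X}$ if either (i) there is $h\in{\rm mor}(G)$ with $(g',h)\in G^2$, $h\cdot x$ defined, $g=g'h$ and $x'=h\cdot x$; or (ii) $x=x'$, $g,g'\in{\rm ob}(G)$ and both $g\cdot x$ and $g'\cdot x'$ are defined. Let $\simeq$ be the equivalence relation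 generated by $\sim$, $Y = \overline{X}/\simeq$, and $[g,x]$ the class of $(g,x)$. The action on $Y$: $g\cdot[h,x]$ is defined iff there is $(h',x')\in\overline{X}$ with $(h,x)\simeq(h',x')$ and $(g,h')\in G^2$, and then $g\cdot[h,x]=[gh',x']$. (The map $i$ is well defined, i.e. independent of the choice of $e$.) *)

(* Defs.v *)
From Stdlib Require Import Relations.

(* A small category, with objects identified with identity morphisms:
   mor is the type of morphisms, isObj singles out the objects. *)
Record SmallCat := {
  mor :> Type;
  isObj : mor -> Prop;
  dom : mor -> mor;
  cod : mor -> mor;
  comp : mor -> mor -> mor;   (* meaningful only on composable pairs *)
  dom_obj : forall g, isObj (dom g);
  cod_obj : forall g, isObj (cod g);
  obj_dom : forall e, isObj e -> dom e = e;
  obj_cod : forall e, isObj e -> cod e = e;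
  comp_dom : forall g h, dom g = cod h -> dom (comp g h) = dom h;
  comp_cod : forall g h, dom g = cod h -> cod (comp g h) = cod g;
  comp_assoc : forall f g h, dom f = cod g -> dom g = cod h ->
      comp f (comp g h) = comp (comp f g) h;
  comp_id_r : forall g, comp g (dom g) = g;
  comp_id_l : forall g, comp (cod g) g = g
}.

Arguments isObj {s} _.
Arguments dom {s} _.
Arguments cod {s} _.
Arguments comp {s} _ _.

Definition composable {G : SmallCat} (g h : G) : Prop := dom g = cod h.

Definition defined {A : Type} (o : option A) : Prop := o <> None.

(* Partial category action: act g x = Some y means g.x is defined and equals y. *)
Record PartialAction (G : SmallCat) (X : Type) := {
  act : G -> X -> option X;
  C1_exists : forall x, exists e, isObj e /\ defined (act e x);
  C1_fix : forall f x, isObj f -> defined (act f x) -> act f x = Some x;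
  C2 : forall g x, defined (act g x) -> defined (act (dom g) x);
  C3 : forall g h x y, composable g h -> act h x = Some y ->
      act (comp g h) x = act g y   (* defined iff defined, and then equal *)
}.

Arguments act {G X} _ _ _.

Section Globalization.
Context {G : SmallCat} {X : Type} (A : PartialAction G X).

Definition Xbar (p : G * X) : Prop := defined (act A (dom (fst p)) (snd p)).

Definition sim (p q : G * X) : Prop :=
  Xbar p /\ Xbar q /\
  ( (exists h, composable (fst q) h /\ defined (act A h (snd p)) /\
        fst p = comp (fst q) h /\ act A h (snd p) = Some (snd q))
    \/ (snd p = snd q /\ isObj (fst p) /\ isObj (fst q) /\
        defined (act A (fst p) (snd p)) /\ defined (act A (fst q) (snd q)))).

Definition simeq : relation (G * X) := clos_refl_sym_trans _ sim.

(* Y = \overline{X}/simeq; an element of Y is represented by its class,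
   a predicate on G * X. *)
Definition cls (p : G * X) : G * X -> Prop := fun q => simeq p q.

Definition Y : Type := { P : G * X -> Prop | exists p, Xbar p /\ P = cls p }.

(* The global action on Y, as a relation:  Yact g P Q  means
   "g . P is defined and equals Q":  there is (h',x') simeq to a
   representative of P with (g,h') in G^2 and Q = [g h', x']. *)
Definition Yact (g : G) (P Q : G * X -> Prop) : Prop :=
  exists h' x', Xbar (h', x') /\ P (h', x') /\ composable g h' /\
    Q = cls (comp g h', x').

End Globalization.

(* Main.v *)
Require Import Defs.
From Stdlib Require Import Relations FunctionalExtensionality PropExtensionality.

Lemma val_sim (G : SmallCat) (X : Type) (A : PartialAction G X) p q :
  sim A p q -> act A (fst p) (snd p) = act A (fst q) (snd q).
Proof.
  destruct p as [g x], q as [g' x']; simpl.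
  intros [_ [_ [[h [Hc [Hd [Heq Ha]]]] | [Hx [Ho [Ho' [Hd Hd']]]]]]].
  - simpl in *; rewrite Heq. apply (C3 _ _ A); assumption.
  - simpl in *; subst x'. rewrite (C1_fix _ _ A g x Ho Hd), (C1_fix _ _ A g' x Ho' Hd'). reflexivity.
Qed.

Lemma val_simeq (G : SmallCat) (X : Type) (A : PartialAction G X) p q :
  simeq A p q -> act A (fst p) (snd p) = act A (fst q) (snd q).
Proof.
  induction 1.
  - apply val_sim; assumption.
  - reflexivity.
  - congruence.
  - congruence.
Qed.

Lemma cls_eq (G : SmallCat) (X : Type) (A : PartialAction G X) p q :
  simeq A p q -> cls A p = cls A q.
Proof.
  intro H. apply functional_extensionality. intro r.
  apply propositional_extensionality. unfold cls. split; intro H'.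
  - eapply rst_trans; [apply rst_sym; exact H | exact H'].
  - eapply rst_trans; [exact H | exact H'].
Qed.

Theorem mainTheorem9 (G : SmallCat) (X : Type) (A : PartialAction G X)
    (e : X -> G) (he : forall x, isObj (e x) /\ defined (act A (e x) x)) :
  let i := fun x : X => cls A (e x, x) in
  (forall y z : X, i y = i z -> y = z) /\
  (forall (y z : X) (g : G), act A g y = Some z <-> Yact A g (i y) (i z)).
Proof.
  intro i.
  assert (Hev : forall x, act A (e x) x = Some x).
  { intro x. destruct (he x) as [Ho Hd]. apply (C1_fix _ _ A); assumption. }
  split.
  - intros y z Hyz. unfold i in Hyz.
    assert (H : cls A (e y, y) (e z, z)) by (rewrite Hyz; apply rst_refl).
    apply val_simeq in H. simpl in H. rewrite !Hev in H. congruence.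
  - intros y z g. split.
    + intro Hg.
      assert (Hdg : defined (act A (dom g) y)).
      { apply (C2 _ _ A). rewrite Hg. discriminate. }
      assert (Hcz : act A (cod g) z = Some z).
      { rewrite <- (C3 _ _ A (cod g) g y z); [rewrite comp_id_l; exact Hg | | exact Hg].
        unfold composable. rewrite obj_dom by apply cod_obj. reflexivity. }
      exists (dom g), y. unfold Xbar; simpl.
      rewrite (obj_dom _ (dom g) (dom_obj _ g)).
      split; [exact Hdg|]. split.
      { unfold i, cls. apply rst_step. unfold sim, Xbar; simpl.
        destruct (he y) as [Ho Hd].
        rewrite (obj_dom _ _ Ho), (obj_dom _ (dom g) (dom_obj _ g)).
        split; [exact Hd|]. split; [exact Hdg|]. right.
        repeat split; auto. apply dom_obj. }
      split.
      { unfold composable. rewrite obj_cod by apply dom_obj. reflexivity. }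
      rewrite comp_id_r. unfold i. apply cls_eq.
      apply rst_sym. eapply rst_trans; apply rst_step.
      * instantiate (1 := (cod g, z)). unfold sim, Xbar; simpl.
        rewrite (obj_dom _ (cod g) (cod_obj _ g)).
        split; [exact Hdg|]. split; [rewrite Hcz; discriminate|].
        left. exists g. repeat split.
        -- unfold composable. rewrite obj_dom by apply cod_obj. reflexivity.
        -- rewrite Hg; discriminate.
        -- rewrite comp_id_l. reflexivity.
        -- exact Hg.
      * unfold sim, Xbar; simpl. destruct (he z) as [Ho Hd].
        rewrite (obj_dom _ (cod g) (cod_obj _ g)), (obj_dom _ _ Ho).
        split; [rewrite Hcz; discriminate|]. split; [exact Hd|].
        right. repeat split; auto; [apply cod_obj | rewrite Hcz; discriminate].
    + intros [h' [x' [Hx [Hp [Hc Hq]]]]].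
      unfold i in Hp, Hq.
      apply val_simeq in Hp. simpl in Hp. rewrite Hev in Hp.
      assert (H : cls A (e z, z) (comp g h', x')) by (rewrite Hq; apply rst_refl).
      apply val_simeq in H. simpl in H. rewrite Hev in H.
      rewrite <- (C3 _ _ A g h' x' y Hc (eq_sym Hp)). symmetry. exact H.
Qed.
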